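(* Let $H$ be a crossed group-cograded weak Hopf quasigroup over $G$ with bijective antipode and crossing $(\pi_q)_{q\in G}$, let $p,q\in G$ and $(V,\rho^V)\in\mathcal{YDWQ}(H)_p$. Let ${}^qV$ be the vector space $V$, whose element corresponding to $v\in V$ is written ${}^qv$, with structures ${}^qv\cdot h={}^q\big(v\cdot\pi_{q^{-1}}(h)\big)$ for $h\in H_{qpq^{-1}}$, and $\rho_r^{{}^qV}({}^qv)={}^q(v_{(0)})\otimes\pi_q(v_{(1,q^{-1}rq)})$ for $r\in G$. Then ${}^qV\in\mathcal{YDWQ}(H)_{qpq^{-1}}$.
   Context: Let $k$ be a field and $G$ a group with identity $e$. A group-cograded weak Hopf quasigroup $H$ over $G$ consists of a family $(H_p)_{p\in G}$ of unital, not necessarily associative, $k$-algebras with units $1_p$; coassociative linear maps $\Delta_{p,q}:H_{pq}\to H_p\otimes H_q$, written $\Delta_{p,q}(h)=h_{(1,p)}\otimes h_{(2,q)}$ (iterated: $h_{(1,p)}\otimes h_{(2,q)}\otimes h_{(3,r)}$, etc.); and a counit $\epsilon:H_e\to k$ with $(\epsilon\otimes\mathrm{id})\Delta_{e,p}=\mathrm{id}=(\mathrm{id}\otimes\epsilon)\Delta_{p,e}$; such that: (1) each $\Delta_{p,q}$ is multiplicative and $(\Delta_{p,q}\otimes\mathrm{id})\Delta_{pq,r}(1_{pqr})=(\Delta_{p,q}(1_{pq})\otimes 1_r)(1_p\otimes\Delta_{q,r}(1_{qr}))=(1_p\otimes\Delta_{q,r}(1_{qr}))(\Delta_{p,q}(1_{pq})\otimes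 1_r)$; (2) $\epsilon((gh)l)=\epsilon(g(hl))=\epsilon(gh_{(2,e)})\epsilon(h_{(1,e)}l)=\epsilon(gh_{(1,e)})\epsilon(h_{(2,e)}l)$ for $g,h,l\in H_e$; (3) writing $\Delta_{p,q}(1_{pq})=1_{(1,p)}\otimes 1_{(2,q)}$ and $\epsilon^t_p(h)=\epsilon(1_{(1,e)}h)1_{(2,p)}$, $\epsilon^s_p(h)=1_{(1,p)}\epsilon(h1_{(2,e)})$ for $h\in H_e$, there are linear maps $S_p:H_p\to H_{p^{-1}}$ with $S_p(h)=S_p(h_{(1,p)})\epsilon^t_{p^{-1}}(h_{(2,e)})=\epsilon^s_{p^{-1}}(h_{(1,e)})S_p(h_{(2,p)})$ for $h\in H_p$ and, for $h\in H_e$, $g\in H_p$: $S_{p^{-1}}(h_{(1,p^{-1})})(h_{(2,p)}g)=\epsilon^s_p(h)g$, $h_{(1,p)}(S_{p^{-1}}(h_{(2,p^{-1})})g)=\epsilon^t_p(h)g$, $(gh_{(1,p)})S_{p^{-1}}(h_{(2,p^{-1})})=g\epsilon^t_p(h)$, $(gS_{p^{-1}}(h_{(1,p^{-1})}))h_{(2,p)}=g\epsilon^s_p(h)$. It is crossed if equipped with algebra isomorphisms $\pi_p:H_q\to H_{pqp^{-1}}$ with $(\pi_p\otimes\pi_p)\Delta_{q,r}=\Delta_{pqp^{-1},prp^{-1}}\pi_p$, $\epsilon\pi_p=\epsilon$, $\pi_{pq}=\pi_p\pi_q$. The antipode is bijective if every $S_p$ is bijective. For fixed $p\in G$, a right-right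 $p$-Yetter-Drinfeld weak quasimodule over $H$ is a vector space $V$ with a bilinear map $V\times H_p\to V$, $(v,h)\mapsto v\cdot h$, and linear maps $\rho_r:V\to V\otimes H_r$ ($r\in G$), $\rho_r(v)=v_{(0)}\otimes v_{(1,r)}$, such that: (i) $v\cdot 1_p=v$, and for $h\in H_e$: $(v\cdot h_{(1,p)})\cdot S_{p^{-1}}(h_{(2,p^{-1})})=v\cdot\epsilon^t_p(h)$ and $(v\cdot S_{p^{-1}}(h_{(1,p^{-1})}))\cdot h_{(2,p)}=v\cdot\epsilon^s_p(h)$; (ii) $(\rho_{r_1}\otimes\mathrm{id}_{H_{r_2}})\rho_{r_2}=(\mathrm{id}_V\otimes\Delta_{r_1,r_2})\rho_{r_1r_2}$ and $(\mathrm{id}_V\otimes\epsilon)\rho_e=\mathrm{id}_V$; (iii) for all $v\in V$, $r\in G$, $h\in H_p$, $g,l\in H_r$: $\rho_r(v\cdot h)=v_{(0)}\cdot h_{(2,p)}\otimes S_{r^{-1}}(\pi_{p^{-1}}(h_{(1,pr^{-1}p^{-1})}))\,(v_{(1,r)}h_{(3,r)})$, $v_{(0)}\otimes(gl)v_{(1,r)}=v_{(0)}\otimes g(lv_{(1,r)})$, and $v_{(0)}\otimes(gv_{(1,r)})l=v_{(0)}\otimes g(v_{(1,r)}l)$. Morphisms are $H_p$-linear maps $f$ with $\rho^W_r f=(f\otimes\mathrm{id})\rho^V_r$ for all $r$. These form the category $\mathcal{YDWQ}(H)_p$. *)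

(* Defs.v *)
From HB Require Import structures.
From mathcomp Require Import all_boot all_algebra.
From mathcomp Require Import boolp.

Set Implicit Arguments.
Unset Strict Implicit.
Unset Printing Implicit Defensive.

Import GRing.Theory.
Local Open Scope ring_scope.

Section Tensors.
Variable k : fieldType.

Definition lin (U W : lmodType k) (f : U -> W) : Prop :=
  forall (a : k) (x y : U), f (a *: x + y) = a *: f x + f y.

(* Elements of a tensor product U (x) V are represented by finite formal sums
   sum_i u_i (x) v_i, i.e. by sequences of pairs.  Two such representatives
   denote the same element of U (x) V iff they have the same image under every
   bilinear map out of U x V (universal property of the tensor product). *)
Definition teq2 (A B : lmodType k) (s t : seq (A * B)) : Prop :=
  forall (W : lmodType k) (f : A -> B -> W),
    (forall b, lin (fun a => f a b)) -> (forall a, lin (f a)) ->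
    \sum_(x <- s) f x.1 x.2 = \sum_(x <- t) f x.1 x.2.

Definition teq3 (A B C : lmodType k) (s t : seq (A * B * C)) : Prop :=
  forall (W : lmodType k) (f : A -> B -> C -> W),
    (forall b c, lin (fun a => f a b c)) ->
    (forall a c, lin (fun b => f a b c)) ->
    (forall a b, lin (f a b)) ->
    \sum_(x <- s) f x.1.1 x.1.2 x.2 = \sum_(x <- t) f x.1.1 x.1.2 x.2.

Definition tscale2 (A B : lmodType k) (a : k) (s : seq (A * B)) :=
  [seq (a *: x.1, x.2) | x <- s].
End Tensors.

(* Transport between graded components H_p and H_q when p = q
   (canonical identification; the value 0 when p <> q is never used). *)
Definition tr (k : fieldType) (G : Type) (H : G -> lmodType k) (p q : G)
  (x : H p) : H q :=
  match pselect (p = q) with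
  | left e => eq_rect p (fun r => (H r : Type)) x q e
  | right _ => 0
  end.
Arguments tr {k G H p q} x.

(* Data of a crossed group-cograded (weak Hopf quasi)group structure over G:
   components H_p (k-vector spaces), products, units, comultiplications
   Delta_{p,q} : H_{pq} -> H_p (x) H_q (as representatives), counit on H_e,
   antipodes S_p : H_p -> H_{p^-1}, and crossing pi_p : H_q -> H_{p q p^-1}. *)
Record cgdata (k : fieldType) (G : groupType) := CGData {
  Hc   : G -> lmodType k;
  hmul : forall p, Hc p -> Hc p -> Hc p;
  hone : forall p, Hc p;
  cop  : forall p q, Hc (p * q)%g -> seq (Hc p * Hc q);
  cou  : Hc 1%g -> k;
  ant  : forall p, Hc p -> Hc (p^-1)%g;
  crs  : forall p q, Hc q -> Hc (p * q * p^-1)%g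
}.
Arguments hmul {k G} _ {p}.
Arguments hone {k G} _ p.
Arguments cop {k G} _ p q.
Arguments cou {k G} _.
Arguments ant {k G} _ {p}.
Arguments crs {k G} _ p {q}.

Section WHQ.
Variables (k : fieldType) (G : groupType) (H : cgdata k G).

Local Notation "x ** y" := (hmul H x y) (at level 40, left associativity).
Local Notation D := (cop H).
Local Notation eps := (cou H).
Local Notation S := (ant H).
Local Notation pi := (crs H).

Definition cop3 p q r (h : Hc H (p * q * r)%g) : seq (Hc H p * Hc H q * Hc H r) :=
  flatten [seq [seq (y.1, y.2, x.2) | y <- D p q x.1] | x <- D (p * q)%g r h].
Arguments cop3 : clear implicits.

Definition tmul2 p q (s t : seq (Hc H p * Hc H q)) :=
  [seq (x.1 ** y.1, x.2 ** y.2) | x <- s, y <- t].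
Definition tmul3 p q r (s t : seq (Hc H p * Hc H q * Hc H r)) :=
  [seq (x.1.1 ** y.1.1, x.1.2 ** y.1.2, x.2 ** y.2) | x <- s, y <- t].

Definition epst p (h : Hc H 1%g) : Hc H p :=
  \sum_(x <- D 1%g p (hone H (1 * p)%g)) eps (x.1 ** h) *: x.2.
Definition epss p (h : Hc H 1%g) : Hc H p :=
  \sum_(x <- D p 1%g (hone H (p * 1)%g)) eps (h ** x.2) *: x.1.
Arguments epst : clear implicits.
Arguments epss : clear implicits.

Definition is_cgwhq : Prop :=
  [/\ (forall p (h : Hc H p), lin (fun g : Hc H p => g ** h)) /\
      (forall p (g : Hc H p), lin (fun h : Hc H p => g ** h)),
      forall p (h : Hc H p), hone H p ** h = h /\ h ** hone H p = h,
      forall p q (a : k) (h g : Hc H (p * q)%g),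
        teq2 (D p q (a *: h + g)) (tscale2 a (D p q h) ++ D p q g),
      @lin k _ k^o eps &
      forall p, lin (ant H (p:=p))] /\
  [/\
      (forall p q r (h : Hc H (p * q * r)%g),
        teq3 (cop3 p q r h)
          (flatten [seq [seq (x.1, y.1, y.2) | y <- D q r x.2]
                      | x <- D p (q * r)%g (tr h)])) /\
      (forall p (h : Hc H p),
        \sum_(x <- D 1%g p (tr h)) eps x.1 *: x.2 = h /\
        \sum_(x <- D p 1%g (tr h)) eps x.2 *: x.1 = h),
      forall p q (g h : Hc H (p * q)%g),
        teq2 (D p q (g ** h)) (tmul2 (D p q g) (D p q h)),
      forall p q r,
        teq3 (cop3 p q r (hone H (p * q * r)%g))
          (tmul3 [seq (x.1, x.2, hone H r) | x <- D p q (hone H (p * q)%g)]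
                 [seq (hone H p, x.1, x.2) | x <- D q r (hone H (q * r)%g)])
        /\
        teq3 (cop3 p q r (hone H (p * q * r)%g))
          (tmul3 [seq (hone H p, x.1, x.2) | x <- D q r (hone H (q * r)%g)]
                 [seq (x.1, x.2, hone H r) | x <- D p q (hone H (p * q)%g)]),
      forall g h l : Hc H 1%g,
        [/\ eps ((g ** h) ** l) = eps (g ** (h ** l)),
            eps (g ** (h ** l)) =
              \sum_(x <- D 1%g 1%g (tr h)) eps (g ** x.2) * eps (x.1 ** l)
          & eps (g ** (h ** l)) =
              \sum_(x <- D 1%g 1%g (tr h)) eps (g ** x.1) * eps (x.2 ** l)]
    & forall p,
      [/\ forall h : Hc H p,
            S h = \sum_(x <- D p 1%g (tr h)) S x.1 ** epst (p^-1)%g x.2 /\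
            S h = \sum_(x <- D 1%g p (tr h)) epss (p^-1)%g x.1 ** S x.2,
          forall (h : Hc H 1%g) (g : Hc H p),
            \sum_(x <- D (p^-1)%g p (tr h)) tr (S x.1) ** (x.2 ** g)
              = epss p h ** g,
          forall (h : Hc H 1%g) (g : Hc H p),
            \sum_(x <- D p (p^-1)%g (tr h)) x.1 ** (tr (S x.2) ** g)
              = epst p h ** g,
          forall (h : Hc H 1%g) (g : Hc H p),
            \sum_(x <- D p (p^-1)%g (tr h)) (g ** x.1) ** tr (S x.2)
              = g ** epst p h
        & forall (h : Hc H 1%g) (g : Hc H p),
            \sum_(x <- D (p^-1)%g p (tr h)) (g ** tr (S x.1)) ** x.2
              = g ** epss p h]].

Definition is_crossing : Prop :=
  [/\ forall p q, lin (crs H p (q:=q)) /\ bijective (crs H p (q:=q)),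
      (forall p q (g h : Hc H q), pi p (g ** h) = pi p g ** pi p h) /\
      (forall p q, pi p (hone H q) = hone H (p * q * p^-1)%g),
      forall p q r (h : Hc H (q * r)%g),
        teq2 [seq (pi p x.1, pi p x.2) | x <- D q r h]
             (D (p * q * p^-1)%g (p * r * p^-1)%g (tr (pi p h))),
      forall p (h : Hc H 1%g), eps (tr (pi p h)) = eps h
    & forall p q r (h : Hc H r), pi (p * q)%g h = tr (pi p (pi q h))].

Definition is_crossed_cgwhq : Prop := is_cgwhq /\ is_crossing.

Definition is_YDWQ (p : G) (V : lmodType k) (act : V -> Hc H p -> V)
  (rho : forall r, V -> seq (V * Hc H r)) : Prop :=
  [/\ (forall h, lin (fun v => act v h)) /\ (forall v, lin (act v)),
      forall r (a : k) (v w : V),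
        teq2 (rho r (a *: v + w)) (tscale2 a (rho r v) ++ rho r w),
      [/\ forall v, act v (hone H p) = v,
          forall (h : Hc H 1%g) v,
            \sum_(x <- D p (p^-1)%g (tr h)) act (act v x.1) (tr (S x.2))
              = act v (epst p h)
        & forall (h : Hc H 1%g) v,
            \sum_(x <- D (p^-1)%g p (tr h)) act (act v (tr (S x.1))) x.2
              = act v (epss p h)],
      (forall r1 r2 v,
         teq3 (flatten [seq [seq (y.1, y.2, x.2) | y <- rho r1 x.1]
                          | x <- rho r2 v])
              [seq (x.1, y.1, y.2) | x <- rho (r1 * r2)%g v,
                                     y <- D r1 r2 x.2])
      /\ (forall v, \sum_(x <- rho 1%g v) eps x.2 *: x.1 = v)
    & forall r,
      [/\ forall v (h : Hc H p),
            teq2 (rho r (act v h))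
              [seq (act y.1 x.1.2,
                    tr (S (tr (pi (p^-1)%g x.1.1) : Hc H (r^-1)%g))
                      ** (y.2 ** x.2))
                 | y <- rho r v,
                   x <- cop3 (p * r^-1 * p^-1)%g p r (tr h)],
          forall v (g l : Hc H r),
            teq2 [seq (y.1, (g ** l) ** y.2) | y <- rho r v]
                 [seq (y.1, g ** (l ** y.2)) | y <- rho r v]
        & forall v (g l : Hc H r),
            teq2 [seq (y.1, (g ** y.2) ** l) | y <- rho r v]
                 [seq (y.1, g ** (y.2 ** l)) | y <- rho r v]]].

End WHQ.
Arguments is_cgwhq {k G} H.
Arguments is_crossing {k G} H.
Arguments is_crossed_cgwhq {k G} H.
Arguments is_YDWQ {k G} H p V act rho.
Arguments epst {k G} H p h.
Arguments epss {k G} H p h.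
Arguments cop3 {k G} H p q r h.

Definition conj_act (k : fieldType) (G : groupType) (H : cgdata k G)
  (p q : G) (V : lmodType k) (act : V -> Hc H p -> V)
  (v : V) (h : Hc H (q * p * q^-1)%g) : V :=
  act v (tr (crs H (q^-1)%g h)).

Definition conj_coact (k : fieldType) (G : groupType) (H : cgdata k G)
  (q : G) (V : lmodType k) (rho : forall r, V -> seq (V * Hc H r))
  (r : G) (v : V) : seq (V * Hc H r) :=
  [seq (y.1, tr (crs H q y.2)) | y <- rho (q^-1 * r * q)%g v].
Arguments conj_act {k G H p} q {V} act v h.
Arguments conj_coact {k G H} q {V} rho r v.

(* Main.v *)
Require Import Defs.
From HB Require Import structures.
From mathcomp Require Import all_boot all_algebra.
From mathcomp Require Import boolp.
Set Implicit Arguments. Unset Strict Implicit. Unset Printing Implicit Defensive.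
Import GRing.Theory.
Local Open Scope ring_scope.

Ltac gsimpl := repeat (rewrite ?invgM ?invgK ?invg1 ?mulgA ?mulg1 ?mul1g ?mulgK ?mulgVK ?mulVg ?mulgV ?mulKg ?mulVKg).
Ltac geq := by gsimpl.

Section Transport.
Variables (k : fieldType) (G : groupType) (H : cgdata k G).
Local Notation "x ** y" := (hmul H x y) (at level 40, left associativity).
Local Notation Hc := (Hc H).

Lemma trE a b (e : a = b) (x : Hc a) : (tr x : Hc b) = eq_rect a (fun r => Hc r) x b e.
Proof. by rewrite /tr; case: pselect => // e'; rewrite (Prop_irrelevance e e'). Qed.

Lemma tr_id a (x : Hc a) : (tr x : Hc a) = x.
Proof. by rewrite (trE erefl). Qed.

Lemma tr_tr a b c (x : Hc a) : a = b -> (tr (tr x : Hc b) : Hc c) = tr x.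
Proof. by move=> e; subst b; rewrite tr_id. Qed.

Lemma tr_tr' a b c (x : Hc a) : b = c -> (tr (tr x : Hc b) : Hc c) = tr x.
Proof. by move=> e; subst c; rewrite tr_id. Qed.

Lemma tr_lin a b : lin (fun x : Hc a => (tr x : Hc b)).
Proof.
move=> c x y; rewrite /tr; case: pselect => [e|_]; last by rewrite scaler0 addr0.
by case: _ / e.
Qed.

Lemma tr_push (phi : G -> G) (F : forall a, Hc a -> Hc (phi a)) a b c (x : Hc a) :
  a = b -> (tr (F a x) : Hc c) = tr (F b (tr x)).
Proof. by move=> e; subst b; rewrite tr_id. Qed.

Lemma tr_mul a b (x y : Hc a) : a = b -> (tr (x ** y) : Hc b) = tr x ** tr y.
Proof. by move=> e; subst b; rewrite !tr_id. Qed.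

Lemma tr_one a b : a = b -> (tr (hone H a) : Hc b) = hone H b.
Proof. by move=> e; subst b; rewrite !tr_id. Qed.

Lemma D_tr a b a' b' (x : Hc (a * b)%g) : a = a' -> b = b' ->
  cop H a' b' (tr x) = map (fun y => (tr y.1, tr y.2)) (cop H a b x).
Proof.
move=> e1 e2; subst a' b'; rewrite tr_id.
by rewrite -[LHS]map_id; apply: eq_map => -[y z] /=; rewrite !tr_id.
Qed.
Lemma D_Tr a b a' b' c (x : Hc c) : a = a' -> b = b' ->
  cop H a' b' (tr x) = map (fun y => (tr y.1, tr y.2)) (cop H a b (tr x)).
Proof.
move=> e1 e2; subst a' b'.
by rewrite -[LHS]map_id; apply: eq_map => -[y z] /=; rewrite !tr_id.
Qed.
End Transport.
Section Lin.
Variable k : fieldType.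
Implicit Types U V W : lmodType k.

Lemma linD U V (f : U -> V) : lin f -> forall x y, f (x + y) = f x + f y.
Proof. by move=> hf x y; have := hf 1 x y; rewrite !scale1r. Qed.
Lemma lin0 U V (f : U -> V) : lin f -> f 0 = 0.
Proof. by move=> hf; have := hf 1 0 0; rewrite !scale1r addr0 => /(congr1 (fun z => z - f 0)); rewrite addrK subrr. Qed.
Lemma linZ U V (f : U -> V) : lin f -> forall a x, f (a *: x) = a *: f x.
Proof. by move=> hf a x; have := hf a x 0; rewrite !addr0 lin0 // addr0. Qed.
Lemma lin_sum U V (f : U -> V) : lin f -> forall (I : Type) (r : seq I) (F : I -> U),
  f (\sum_(i <- r) F i) = \sum_(i <- r) f (F i).
Proof.
move=> hf I r F; elim: r => [|x r IH]; first by rewrite !big_nil lin0.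
by rewrite !big_cons linD // IH.
Qed.
Lemma lin_comp U V W (f : V -> W) (g : U -> V) : lin f -> lin g -> lin (fun x => f (g x)).
Proof. by move=> hf hg a x y; rewrite hg hf. Qed.
Lemma lin_id U : lin (fun x : U => x). Proof. by []. Qed.
Lemma lin_add U V (f g : U -> V) : lin f -> lin g -> lin (fun x => f x + g x).
Proof. by move=> hf hg a x y; rewrite hf hg scalerDr addrACA. Qed.
Lemma lin_scale U V (f : U -> V) c : lin f -> lin (fun x => c *: f x).
Proof. by move=> hf a x y; rewrite hf scalerDr !scalerA mulrC. Qed.
Lemma lin_sumf U V (I : Type) (r : seq I) (f : I -> U -> V) :
  (forall i, lin (f i)) -> lin (fun x => \sum_(i <- r) f i x).
Proof.
move=> hf a x y; elim: r => [|i r IH]; first by rewrite !big_nil scaler0 addr0.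
by rewrite !big_cons IH hf scalerDr addrACA.
Qed.
Lemma lin_scalel U V (f : U -> k^o) (v : V) : lin f -> lin (fun x => f x *: v).
Proof. by move=> hf a x y; rewrite hf scalerDl scalerA. Qed.

Lemma teq2_refl (A B : lmodType k) (s : seq (A * B)) : teq2 s s. Proof. by []. Qed.
Lemma teq2_sym (A B : lmodType k) (s t : seq (A * B)) : teq2 s t -> teq2 t s.
Proof. by move=> h W f h1 h2; rewrite (h W f h1 h2). Qed.
Lemma teq2_trans (A B : lmodType k) (s t u : seq (A * B)) : teq2 s t -> teq2 t u -> teq2 s u.
Proof. by move=> h h' W f h1 h2; rewrite (h W f h1 h2) (h' W f h1 h2). Qed.
Lemma teq3_refl (A B C : lmodType k) (s : seq (A * B * C)) : teq3 s s. Proof. by []. Qed.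

End Lin.


Lemma teq2_mapr (k : fieldType) (A B B' : lmodType k) (g : B -> B') (s t : seq (A * B)) :
  lin g -> teq2 s t -> teq2 (map (fun y => (y.1, g y.2)) s) (map (fun y => (y.1, g y.2)) t).
Proof.
move=> hg hst W F F1 F2; rewrite !big_map.
apply: (hst W (fun a b => F a (g b))) => [b|a]; [exact: F1| exact: lin_comp (F2 a) hg].
Qed.

Lemma rho_tr (k : fieldType) (G : groupType) (H : cgdata k G) (V : lmodType k)
  (rho : forall r : G, V -> seq (V * Hc H r)) s s' v : s = s' ->
  rho s' v = map (fun y => (y.1, tr y.2)) (rho s v).
Proof.
move=> e; subst s'; rewrite -[LHS]map_id; apply: eq_map => -[y z] /=; by rewrite tr_id.
Qed.

Section Main.
Variables (k : fieldType) (G : groupType) (H : cgdata k G).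
Variable HW : is_cgwhq H.
Variable HX : is_crossing H.
Local Notation "x ** y" := (hmul H x y) (at level 40, left associativity).
Local Notation Hc := (Hc H).
Local Notation D := (cop H).
Local Notation eps := (cou H).
Local Notation S := (ant H).
Local Notation pi := (crs H).
Local Notation one := (hone H).

Lemma mulL_lin p (h : Hc p) : lin (fun g : Hc p => g ** h).
Proof. by case: HW => [[[hl hr] _ _ _ _] _]. Qed.
Lemma mulR_lin p (g : Hc p) : lin (fun h : Hc p => g ** h).
Proof. by case: HW => [[[hl hr] _ _ _ _] _]. Qed.
Lemma mul1x p (h : Hc p) : one p ** h = h.
Proof. by case: HW => [[_ h1 _ _ _] _]; case: (h1 p h). Qed.
Lemma mulx1 p (h : Hc p) : h ** one p = h.
Proof. by case: HW => [[_ h1 _ _ _] _]; case: (h1 p h). Qed.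
Lemma D_lin p q (a : k) (h g : Hc (p * q)%g) :
  teq2 (D p q (a *: h + g)) (tscale2 a (D p q h) ++ D p q g).
Proof. by case: HW => [[_ _ hD _ _] _]. Qed.
Lemma eps_lin : @lin k _ k^o eps.
Proof. by case: HW => [[_ _ _ he _] _]. Qed.
Lemma S_lin p : lin (@ant k G H p).
Proof. by case: HW => [[_ _ _ _ hS] _]. Qed.
Lemma coassoc p q r (h : Hc (p * q * r)%g) :
  teq3 (cop3 H p q r h)
       (flatten [seq [seq (x.1, y.1, y.2) | y <- D q r x.2] | x <- D p (q * r)%g (tr h)]).
Proof. by case: HW => [_ [[hc _] _ _ _ _]]. Qed.
Lemma antA1 p (h : Hc p) : S h = \sum_(x <- D p 1%g (tr h)) S x.1 ** epst H (p^-1)%g x.2.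
Proof. by case: HW => [_ [_ _ _ _ ha]]; case: (ha p) => [h1 _ _ _ _]; case: (h1 h). Qed.
Lemma antA1' p (h : Hc p) : S h = \sum_(x <- D 1%g p (tr h)) epss H (p^-1)%g x.1 ** S x.2.
Proof. by case: HW => [_ [_ _ _ _ ha]]; case: (ha p) => [h1 _ _ _ _]; case: (h1 h). Qed.
Lemma antA2 p (h : Hc 1%g) (g : Hc p) :
  \sum_(x <- D (p^-1)%g p (tr h)) tr (S x.1) ** (x.2 ** g) = epss H p h ** g.
Proof. by case: HW => [_ [_ _ _ _ ha]]; case: (ha p) => [_ h2 _ _ _]. Qed.
Lemma antA3 p (h : Hc 1%g) (g : Hc p) :
  \sum_(x <- D p (p^-1)%g (tr h)) x.1 ** (tr (S x.2) ** g) = epst H p h ** g.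
Proof. by case: HW => [_ [_ _ _ _ ha]]; case: (ha p) => [_ _ h3 _ _]. Qed.

Lemma pi_lin p q : lin (@crs k G H p q).
Proof. by case: HX => hh _ _ _ _; case: (hh p q). Qed.
Lemma pi_bij p q : bijective (@crs k G H p q).
Proof. by case: HX => hh _ _ _ _; case: (hh p q). Qed.
Lemma pi_mul p q (g h : Hc q) : pi p (g ** h) = pi p g ** pi p h.
Proof. by case: HX => _ [hh _] _ _ _. Qed.
Lemma pi_one p q : pi p (one q) = one (p * q * p^-1)%g.
Proof. by case: HX => _ [_ hh] _ _ _. Qed.
Lemma pi_D p q r (h : Hc (q * r)%g) :
  teq2 [seq (pi p x.1, pi p x.2) | x <- D q r h]
       (D (p * q * p^-1)%g (p * r * p^-1)%g (tr (pi p h))).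
Proof. by case: HX. Qed.
Lemma pi_eps p (h : Hc 1%g) : eps (tr (pi p h)) = eps h.
Proof. by case: HX. Qed.
Lemma pi_comp p q r (h : Hc r) : pi (p * q)%g h = tr (pi p (pi q h)).
Proof. by case: HX. Qed.

Definition Pi q b {a} (x : Hc a) : Hc b := tr (pi q x).
Definition Sb b {a} (x : Hc a) : Hc b := tr (S x).

Lemma Pi_tr q b a a' (x : Hc a) : a = a' -> Pi q b (tr x : Hc a') = Pi q b x.
Proof. by move=> e; subst a'; rewrite tr_id. Qed.
Lemma tr_Pi q a b c (x : Hc a) : b = (q * a * q^-1)%g -> (tr (Pi q b x) : Hc c) = Pi q c x.
Proof. by move=> e; rewrite /Pi tr_tr // e. Qed.
Lemma Pi_q q q' a b (x : Hc a) : q = q' -> Pi q b x = Pi q' b x.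
Proof. by move=> e; subst q'. Qed.
Lemma Pi_comp q q' a b c (x : Hc a) : b = (q' * a * q'^-1)%g ->
  Pi q c (Pi q' b x) = Pi (q * q') c x.
Proof.
move=> e; rewrite /Pi pi_comp tr_tr; last by gsimpl.
by rewrite -(@tr_push k G H _ (fun a => @crs k G H q a)) // e.
Qed.
Lemma Pi_lin q a b : lin (@Pi q b a).
Proof. exact: (lin_comp (@tr_lin _ _ _ _ _) (@pi_lin _ _)). Qed.
Lemma Pi_mul q a b (x y : Hc a) : b = (q * a * q^-1)%g -> Pi q b (x ** y) = Pi q b x ** Pi q b y.
Proof. by move=> e; rewrite /Pi pi_mul tr_mul // e. Qed.
Lemma Pi_one q a b : b = (q * a * q^-1)%g -> Pi q b (one a) = one b.
Proof. by move=> e; rewrite /Pi pi_one tr_one // e. Qed.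
Lemma Pi_eps q a (x : Hc a) : a = 1%g -> eps (Pi q 1 x) = eps (tr x : Hc 1%g).
Proof. by move=> e; subst a; rewrite tr_id /Pi pi_eps. Qed.
Lemma Pi_D q a b c a' b' (x : Hc c) : a' = (q * a * q^-1)%g -> b' = (q * b * q^-1)%g ->
  c = (a * b)%g ->
  teq2 (map (fun y => (Pi q a' y.1, Pi q b' y.2)) (D a b (tr x))) (D a' b' (Pi q (a' * b') x)).
Proof.
move=> e1 e2 e3; subst a' b' c; rewrite tr_id.
have -> : map (fun y => (Pi q (q * a * q^-1) y.1, Pi q (q * b * q^-1) y.2)) (D a b x)
  = [seq (pi q y.1, pi q y.2) | y <- D a b x].
  by apply: eq_map => y; rewrite /Pi !tr_id.
exact: pi_D.
Qed.
Lemma Pi_1 q a b (x : Hc a) : q = 1%g -> Pi q b x = tr x.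
Proof.
move=> e; subst q.
set a' := (1 * a * 1^-1)%g.
have h1 : pi 1 (pi 1 x) = pi 1 (tr x : Hc a').
  have h0 : (tr (pi (1 * 1) x) : Hc (1 * a' * 1^-1)%g) = pi 1 (pi 1 x).
    by rewrite pi_comp tr_tr ?tr_id //; rewrite /a'; gsimpl.
  rewrite -h0.
  have pq : forall q q' c, q = q' -> (tr (pi q x) : Hc c) = tr (pi q' x) by move=> ? ? ? ->.
  rewrite (pq _ 1%g) ?mulg1 //.
  rewrite (@tr_push k G H _ (fun a => @crs k G H 1 a) _ a'); first exact: tr_id.
  by rewrite /a'; gsimpl.
have h2 : pi 1 x = tr x by case: (pi_bij 1%g a') => g gK _; rewrite -[LHS]gK h1 gK.
by rewrite /Pi h2 tr_tr //; rewrite /a'; gsimpl.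
Qed.
Lemma Pi_inv q q' a b c (x : Hc a) : (q' * q = 1)%g -> b = (q * a * q^-1)%g ->
  Pi q' c (Pi q b x) = tr x.
Proof. by move=> e1 e2; rewrite Pi_comp // Pi_1. Qed.

Lemma Sb_tr b a a' (x : Hc a) : a = a' -> Sb b (tr x : Hc a') = Sb b x.
Proof. by move=> e; subst a'; rewrite tr_id. Qed.
Lemma tr_Sb a b c (x : Hc a) : b = (a^-1)%g -> (tr (Sb b x) : Hc c) = Sb c x.
Proof. by move=> e; rewrite /Sb tr_tr // e. Qed.
Lemma Sb_lin a b : lin (@Sb b a).
Proof. exact: (lin_comp (@tr_lin _ _ _ _ _) (@S_lin _)). Qed.
Lemma Sb_id a (x : Hc a) : Sb (a^-1)%g x = S x.
Proof. by rewrite /Sb tr_id. Qed.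

Lemma sumD_lin (W : lmodType k) a b (F : Hc a -> Hc b -> W) :
  (forall y, lin (fun x => F x y)) -> (forall x, lin (F x)) ->
  lin (fun h : Hc (a * b)%g => \sum_(x <- D a b h) F x.1 x.2).
Proof.
move=> h1 h2 c h g /=; rewrite (D_lin c h g h1 h2) big_cat /= big_map scaler_sumr.
by congr (_ + _); apply: eq_bigr => x _ /=; rewrite (linZ (h1 _)).
Qed.

Lemma S_unique (T : forall a, Hc a -> Hc (a^-1)%g) :
  (forall a, lin (T a)) ->
  (forall c (h : Hc 1%g), \sum_(x <- D c (c^-1)%g (tr h)) x.1 ** (tr (T _ x.2) : Hc c) = epst H c h) ->
  (forall a (h : Hc a), T a h = \sum_(x <- D 1%g a (tr h)) epss H (a^-1)%g x.1 ** T a x.2) ->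
  forall a (h : Hc a), S h = T a h.
Proof.
move=> Tlin hT3 hT1 p h.
set F := fun (u : Hc p) (w : Hc (p^-1)%g) (z : Hc (p^-1^-1)%g) => S u ** (w ** (tr (T _ z) : Hc (p^-1)%g)).
have F1 : forall w z, lin (fun u => F u w z).
  by move=> w z; apply: (lin_comp (mulL_lin _) (@S_lin _)).
have F2 : forall u z, lin (fun w => F u w z).
  by move=> u z; apply: (lin_comp (mulR_lin _) (mulL_lin _)).
have F3 : forall u w, lin (F u w).
  move=> u w; apply: (lin_comp (mulR_lin _)); apply: (lin_comp (mulR_lin _)).
  exact: (lin_comp (@tr_lin _ _ _ _ _) (Tlin _)).
have co := coassoc (tr h : Hc (p * p^-1 * p^-1^-1)%g) F1 F2 F3.
rewrite /cop3 !big_flatten /= !big_map in co.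
have e0 : (tr (tr h : Hc (p * p^-1 * p^-1^-1)%g) : Hc (p * (p^-1 * p^-1^-1))%g) = tr h.
  by rewrite tr_tr //; gsimpl.
rewrite e0 (@D_Tr k G H p 1%g p (p^-1 * p^-1^-1)%g p h) ?big_map /= in co; try by gsimpl.
rewrite antA1.
have L : \sum_(x <- D p 1%g (tr h)) S x.1 ** epst H (p^-1)%g x.2 =
   \sum_(x <- D p 1%g (tr h)) \sum_(y <- D (p^-1)%g (p^-1^-1)%g (tr x.2)) F (tr x.1) y.1 y.2.
  apply: eq_bigr => x _; rewrite -hT3 (lin_sum (mulR_lin _)) tr_id.
  by apply: eq_bigr => y _; rewrite /F.
rewrite L.
have -> : \sum_(x <- D p 1%g (tr h))
     \sum_(y <- D (p^-1)%g (p^-1^-1)%g (tr x.2)) F (tr x.1) y.1 y.2 =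
   \sum_(j <- D p 1%g (tr h))
       \sum_(i <- [seq ((tr j.1 : Hc p), y.1, y.2) | y <- D (p^-1)%g (p^-1^-1)%g (tr j.2)])
          F i.1.1 i.1.2 i.2.
  by apply: eq_bigr => x _; rewrite big_map.
rewrite -co (@D_Tr k G H 1%g p (p * p^-1)%g (p^-1^-1)%g p h) ?big_map /=; try by gsimpl.
rewrite hT1; apply: eq_bigr => j _; rewrite big_map /F /=.
set g := (tr (T _ (tr j.2)) : Hc (p^-1)%g).
have -> : g = T p j.2.
  by rewrite /g -(@tr_push k G H _ T) ?tr_id //; gsimpl.
rewrite -(@antA2 (p^-1)%g j.1 (T p j.2)).
rewrite (@D_Tr k G H p (p^-1)%g (p^-1^-1)%g (p^-1)%g _ j.1) ?big_map /=; try by gsimpl.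
apply: eq_bigr => y _ /=; rewrite tr_id.
by rewrite -(@tr_push k G H _ (fun a => @ant k G H a)) ?tr_id //; gsimpl.
Qed.
Lemma eps_mulL_lin (w : Hc 1%g) : @lin k _ k^o (fun y : Hc 1%g => eps (y ** w)).
Proof. exact: (lin_comp eps_lin (mulL_lin _)). Qed.
Lemma eps_mulR_lin (w : Hc 1%g) : @lin k _ k^o (fun y : Hc 1%g => eps (w ** y)).
Proof. exact: (lin_comp eps_lin (mulR_lin _)). Qed.

Lemma epst_lin c : lin (epst H c).
Proof.
rewrite /epst; apply: lin_sumf => x.
exact: (@lin_scalel _ _ _ (fun h => eps (x.1 ** h)) _ (eps_mulR_lin _)).
Qed.
Lemma epss_lin c : lin (epss H c).
Proof.
rewrite /epss; apply: lin_sumf => x.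
exact: (@lin_scalel _ _ _ (fun h => eps (h ** x.2)) _ (eps_mulL_lin _)).
Qed.

Lemma Pi_epst q c b (u : Hc 1%g) : b = (q * c * q^-1)%g ->
  Pi q b (epst H c u) = epst H b (Pi q 1 u).
Proof.
move=> e; rewrite /epst (lin_sum (Pi_lin _ _)).
have hD := @Pi_D q 1%g c (1 * c)%g 1%g b (one (1 * c)%g) ltac:(by gsimpl) e erefl.
rewrite tr_id (@Pi_one q (1 * c)%g (1 * b)%g) in hD; last by rewrite e; gsimpl.
have := hD _ (fun y1 y2 => eps (y1 ** Pi q 1 u) *: y2).
rewrite big_map => <- //.
- apply: eq_bigr => x _ /=; rewrite (linZ (Pi_lin _ _)); congr (_ *: _).
  by rewrite -Pi_mul ?Pi_eps ?tr_id //; gsimpl.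
- by move=> y2; apply: (@lin_scalel _ _ _ (fun y1 => eps (y1 ** Pi q 1 u))); exact: eps_mulL_lin.
- by move=> y1 a x y; rewrite scalerDr scalerA mulrC -scalerA.
Qed.

Lemma Pi_epss q c b (u : Hc 1%g) : b = (q * c * q^-1)%g ->
  Pi q b (epss H c u) = epss H b (Pi q 1 u).
Proof.
move=> e; rewrite /epss (lin_sum (Pi_lin _ _)).
have hD := @Pi_D q c 1%g (c * 1)%g b 1%g (one (c * 1)%g) e ltac:(by gsimpl) erefl.
rewrite tr_id (@Pi_one q (c * 1)%g (b * 1)%g) in hD; last by rewrite e; gsimpl.
have := hD _ (fun y1 y2 => eps (Pi q 1 u ** y2) *: y1).
rewrite big_map => <- //.
- apply: eq_bigr => x _ /=; rewrite (linZ (Pi_lin _ _)); congr (_ *: _).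
  by rewrite -Pi_mul ?Pi_eps ?tr_id //; gsimpl.
- by move=> y2 a x y; rewrite scalerDr scalerA mulrC -scalerA.
- by move=> y1; apply: (@lin_scalel _ _ _ (fun y2 => eps (Pi q 1 u ** y2))); exact: eps_mulR_lin.
Qed.

Lemma antA3' c (h : Hc 1%g) :
  \sum_(x <- D c (c^-1)%g (tr h)) x.1 ** (tr (S x.2) : Hc c) = epst H c h.
Proof.
have := @antA3 c h (one c); rewrite mulx1 => <-.
by apply: eq_bigr => x _; rewrite mulx1.
Qed.

Definition Tq q a (y : Hc a) : Hc (a^-1)%g := Pi q (a^-1)%g (S (Pi (q^-1)%g (q^-1 * a * q)%g y)).

Lemma Tq_lin q a : lin (@Tq q a).
Proof. exact: (lin_comp (Pi_lin _ _) (lin_comp (@S_lin _) (Pi_lin _ _))). Qed.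

Lemma Tq_A3 q c (h : Hc 1%g) :
  \sum_(x <- D c (c^-1)%g (tr h)) x.1 ** (tr (Tq q x.2) : Hc c) = epst H c h.
Proof.
set c' := (q^-1 * c * q)%g; set d := (q^-1 * c^-1 * q)%g.
have E : forall x : Hc c * Hc (c^-1)%g, x.1 ** (tr (Tq q x.2) : Hc c) =
    Pi q c (Pi (q^-1)%g c' x.1 ** Sb c' (Pi (q^-1)%g d x.2)).
  move=> x; rewrite Pi_mul; last by rewrite /c'; gsimpl.
  rewrite Pi_inv ?tr_id; try by rewrite /c'; gsimpl.
  rewrite /Sb Pi_tr; last by rewrite /d /c'; gsimpl.
  by rewrite /Tq tr_Pi //; rewrite /d; gsimpl.
under eq_bigr do rewrite E.
rewrite -(lin_sum (Pi_lin _ _)).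
have hD := @Pi_D (q^-1)%g c (c^-1)%g 1%g c' d h ltac:(by rewrite /c'; gsimpl)
   ltac:(by rewrite /d; gsimpl) ltac:(by gsimpl).
have := hD _ (fun y z => y ** Sb c' z) (fun z => mulL_lin _)
   (fun y => lin_comp (mulR_lin _) (Sb_lin _)).
rewrite big_map => -> /=.
rewrite (@D_Tr k G H c' (c'^-1)%g c' d _ (pi (q^-1)%g h)) ?big_map; try by rewrite /d /c'; gsimpl.
have := antA3' c' (Pi (q^-1)%g 1%g h); rewrite tr_Pi; last by gsimpl.
have -> : \sum_(i <- D c' (c'^-1)%g (tr (pi (q^-1)%g h)))
    (tr i.1 : Hc c') ** Sb c' (tr i.2 : Hc d) =
  \sum_(x <- D c' (c'^-1)%g (Pi (q^-1)%g (c' * c'^-1)%g h)) x.1 ** (tr (S x.2) : Hc c').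
  by apply: eq_bigr => x _; rewrite tr_id Sb_tr //; rewrite /d /c'; gsimpl.
move=> ->; rewrite Pi_epst; last by rewrite /c'; gsimpl.
by rewrite Pi_inv ?tr_id //; gsimpl.
Qed.

Lemma Tq_A1 q a (h : Hc a) :
  Tq q h = \sum_(x <- D 1%g a (tr h)) epss H (a^-1)%g x.1 ** Tq q x.2.
Proof.
set a' := (q^-1 * a * q)%g.
set G2 := fun (y : Hc 1%g) (z : Hc a') => epss H (a^-1)%g (Pi q 1 y) ** Pi q (a^-1)%g (S z).
have E : forall x : Hc 1%g * Hc a, epss H (a^-1)%g x.1 ** Tq q x.2 =
    G2 (Pi (q^-1)%g 1 x.1) (Pi (q^-1)%g a' x.2).
  by move=> x; rewrite /G2 Pi_inv ?tr_id //; gsimpl.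
under [RHS]eq_bigr do rewrite E.
have hD := @Pi_D (q^-1)%g 1%g a a 1%g a' h ltac:(by gsimpl) ltac:(by rewrite /a'; gsimpl) ltac:(by gsimpl).
have := hD _ G2 (fun z => lin_comp (mulL_lin _) (lin_comp (epss_lin _) (Pi_lin _ _)))
   (fun y => lin_comp (mulR_lin _) (lin_comp (Pi_lin _ _) (@S_lin _))).
rewrite big_map /= => ->.
rewrite {1}/Tq antA1' tr_Pi; last by rewrite /a'; gsimpl.
rewrite (lin_sum (Pi_lin _ _)); apply: eq_bigr => z _.
rewrite /G2 Pi_mul; last by rewrite /a'; gsimpl.
by rewrite Pi_epss //; rewrite /a'; gsimpl.
Qed.

Lemma S_eq_Tq q a (h : Hc a) : S h = Tq q h.
Proof.
apply: (S_unique (T := fun a => @Tq q a)) => //.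
- by move=> b; exact: Tq_lin.
- by move=> c h0; exact: Tq_A3.
- by move=> b h0; exact: Tq_A1.
Qed.

Lemma S_Pi q a b c (x : Hc a) : b = (q * a * q^-1)%g -> c = (b^-1)%g ->
  Sb c (Pi q b x) = Pi q c (S x).
Proof.
move=> e1 e2; rewrite /Sb (S_eq_Tq q) /Tq Pi_inv; try by rewrite ?e1; gsimpl.
rewrite tr_Pi; last by rewrite e1; gsimpl.
rewrite /Pi [RHS](@tr_push k G H (fun a => (q * a^-1 * q^-1)%g) (fun a y => pi q (S y)) a (q^-1 * b * q)%g) //.
all: by rewrite ?e1; gsimpl.
Qed.

Lemma Pi_D' q a b a' b' (x : Hc (a * b)%g) : a' = (q * a * q^-1)%g -> b' = (q * b * q^-1)%g ->
  teq2 (map (fun y => (Pi q a' y.1, Pi q b' y.2)) (D a b x)) (D a' b' (Pi q (a' * b') x)).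
Proof. by move=> e1 e2; have := @Pi_D q a b _ a' b' x e1 e2 erefl; rewrite tr_id. Qed.

Lemma Pi_cop3 q a b c a' b' c' (h : Hc (a * b * c)%g) :
  a' = (q * a * q^-1)%g -> b' = (q * b * q^-1)%g -> c' = (q * c * q^-1)%g ->
  teq3 (map (fun x => (Pi q a' x.1.1, Pi q b' x.1.2, Pi q c' x.2)) (cop3 H a b c h))
       (cop3 H a' b' c' (Pi q (a' * b' * c') h)).
Proof.
move=> e1 e2 e3 W F F1 F2 F3.
rewrite big_map /cop3 !big_flatten !big_map.
set Gf := fun (u : Hc (a' * b')%g) (w : Hc c') => \sum_(y <- D a' b' u) F y.1 y.2 w.
have G1 : forall w, lin (fun u => Gf u w).
  by move=> w; apply: (@sumD_lin _ _ _ (fun y1 y2 => F y1 y2 w)) => [y|x]; [exact: F1|exact: F2].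
have G2 : forall u, lin (Gf u).
  by move=> u; apply: lin_sumf => y; exact: F3.
have := @Pi_D' q (a * b)%g c (a' * b')%g c' h ltac:(by rewrite e1 e2; gsimpl) e3 _ Gf G1 G2.
rewrite big_map /= => E.
transitivity (\sum_(x <- D (a' * b')%g c' (Pi q (a' * b' * c')%g h)) Gf x.1 x.2); last first.
  by apply: eq_bigr => x _; rewrite big_map.
rewrite -E; apply: eq_bigr => x _; rewrite big_map /Gf /=.
have := @Pi_D' q a b a' b' x.1 e1 e2 _ (fun y1 y2 => F y1 y2 (Pi q c' x.2)) (fun y => F1 _ _) (fun y => F2 _ _).
by rewrite big_map.
Qed.

Lemma Sb_Pi_deg r X c c' a (u : Hc a) : c = c' -> Sb r (Pi X c u) = Sb r (Pi X c' u).
Proof. by move=> e; subst c'. Qed.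


Lemma PiE q a b (x : Hc a) : (tr (crs H q x) : Hc b) = Pi q b x. Proof. by []. Qed.
Lemma conj_actE p q (V : lmodType k) (act : V -> Hc p -> V) v (h : Hc (q * p * q^-1)%g) :
  conj_act q act v h = act v (Pi (q^-1)%g p h).
Proof. by []. Qed.

Lemma Pi_Sb q a b c d (w : Hc a) : b = (a^-1)%g -> d = (q * a * q^-1)%g -> c = (d^-1)%g ->
  Pi q c (Sb b w) = Sb c (Pi q d w).
Proof.
move=> e1 e2 e3; have := @S_Pi q a d c w e2 e3; rewrite /Sb => ->.
by rewrite Pi_tr // e1.
Qed.

Lemma Pi_tr_both q a b c a' (x : Hc a) : b = (q * a * q^-1)%g -> a = a' ->
  (tr (Pi q b x) : Hc c) = Pi q c (tr x : Hc a').
Proof. by move=> e1 e2; rewrite tr_Pi // Pi_tr. Qed.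

Lemma main_lemma (p q : G) (V : lmodType k) (act : V -> Hc p -> V)
  (rho : forall r : G, V -> seq (V * Hc r)) :
  is_YDWQ H p V act rho -> is_YDWQ H (q * p * q^-1)%g V (conj_act q act) (conj_coact q rho).
Proof.
case=> [[actl actr] rholin [act1 actA actB] [rhoco rhocu] rhoiii].
split.
- split => [h|v]; first exact: actl.
  exact: (lin_comp (actr v) (Pi_lin _ _)).
- move=> r a v w; rewrite /conj_coact.
  set f := (fun y : V * Hc (q^-1 * r * q)%g => (y.1, (tr (crs H q y.2) : Hc r))).
  have -> : tscale2 a (map f (rho _ v)) ++ map f (rho _ w) = map f (tscale2 a (rho _ v) ++ rho _ w).
    by rewrite map_cat /tscale2 -!map_comp.
  exact: (teq2_mapr (g := fun z : Hc (q^-1 * r * q)%g => (tr (crs H q z) : Hc r)) (Pi_lin q r) (rholin _ a v w)).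
- split.
  + move=> v; rewrite /conj_act.
    have -> : (tr (crs H (q^-1)%g (one (q * p * q^-1)%g)) : Hc p) = one p.
      by apply: (@Pi_one (q^-1)%g); gsimpl.
    exact: act1.
  + move=> h v.
    set Gf := fun (y : Hc p) (z : Hc (p^-1)%g) => act (act v y) (Sb p z).
    transitivity (\sum_(x <- D (q * p * q^-1)%g ((q * p * q^-1)^-1)%g (tr h))
                     Gf (Pi (q^-1)%g p x.1) (Pi (q^-1)%g (p^-1)%g x.2)).
      apply: eq_bigr => x _; rewrite /Gf !conj_actE.
      rewrite Pi_tr; last by gsimpl.
      by rewrite S_Pi //; gsimpl.
    have hD := @Pi_D (q^-1)%g (q * p * q^-1)%g ((q * p * q^-1)^-1)%g 1%g p (p^-1)%g h
      ltac:(by gsimpl) ltac:(by gsimpl) ltac:(by gsimpl).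
    have := hD _ Gf (fun z => lin_comp (actl _) (actr v)) (fun y => lin_comp (actr _) (Sb_lin _)).
    rewrite big_map /= => ->.
    have := actA (Pi (q^-1)%g 1%g h) v; rewrite tr_Pi; last by gsimpl.
    rewrite /Gf /Sb => ->.
    by rewrite conj_actE Pi_epst //; gsimpl.
  + move=> h v.
    set Gf := fun (y : Hc (p^-1)%g) (z : Hc p) => act (act v (Sb p y)) z.
    transitivity (\sum_(x <- D ((q * p * q^-1)^-1)%g (q * p * q^-1)%g (tr h))
                     Gf (Pi (q^-1)%g (p^-1)%g x.1) (Pi (q^-1)%g p x.2)).
      apply: eq_bigr => x _; rewrite /Gf !conj_actE.
      rewrite Pi_tr; last by gsimpl.
      by rewrite S_Pi //; gsimpl.
    have hD := @Pi_D (q^-1)%g ((q * p * q^-1)^-1)%g (q * p * q^-1)%g 1%g (p^-1)%g p h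
      ltac:(by gsimpl) ltac:(by gsimpl) ltac:(by gsimpl).
    have := hD _ Gf (fun z => lin_comp (actl _) (lin_comp (actr v) (Sb_lin _))) (fun y => actr _).
    rewrite big_map /= => ->.
    have := actB (Pi (q^-1)%g 1%g h) v; rewrite tr_Pi; last by gsimpl.
    rewrite /Gf /Sb => ->.
    by rewrite conj_actE Pi_epss //; gsimpl.
- split.
  + move=> r1 r2 v W F F1 F2 F3.
    rewrite big_flatten /= !big_map big_allpairs_dep /= big_map.
    have co := rhoco (q^-1 * r1 * q)%g (q^-1 * r2 * q)%g v W
      (fun a b c => F a (Pi q r1 b) (Pi q r2 c)) (fun b c => F1 _ _)
      (fun a c => lin_comp (F2 _ _) (Pi_lin _ _)) (fun a b => lin_comp (F3 _ _) (Pi_lin _ _)).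
    rewrite big_flatten /= !big_map big_allpairs_dep /= in co.
    transitivity (\sum_(j <- rho (q^-1 * r2 * q)%g v)
       \sum_(i <- [seq (y.1, y.2, j.2) | y <- rho (q^-1 * r1 * q)%g j.1])
          F i.1.1 (Pi q r1 i.1.2) (Pi q r2 i.2)).
      by apply: eq_bigr => j _; rewrite /conj_coact !big_map.
    rewrite co (@rho_tr _ _ _ _ rho (q^-1 * r1 * q * (q^-1 * r2 * q))%g (q^-1 * (r1 * r2) * q)%g v);
      last by gsimpl.
    rewrite big_map; apply: eq_bigr => j _ /=.
    have := @Pi_D' q (q^-1 * r1 * q)%g (q^-1 * r2 * q)%g r1 r2 j.2 ltac:(by gsimpl) ltac:(by gsimpl)
      _ (fun a b => F j.1 a b) (fun b => F2 _ _) (fun a => F3 _ _).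
    rewrite big_map /= => ->.
    by rewrite PiE Pi_tr //; gsimpl.
  + move=> v; rewrite /conj_coact big_map /=.
    rewrite (@rho_tr _ _ _ _ rho 1%g (q^-1 * 1 * q)%g v) ?big_map; last by gsimpl.
    rewrite -[RHS]rhocu; apply: eq_bigr => y _ /=.
    by rewrite PiE Pi_tr ?Pi_eps ?tr_id //; gsimpl.
- move=> r; case: (rhoiii (q^-1 * r * q)%g) => [rA rB rC]; split.
  + move=> v h.
    pose s := (q^-1 * r * q)%g.
    set h2 := Pi (q^-1)%g p h.
    have L := teq2_mapr (Pi_lin q r) (rA v h2).
    apply: (teq2_trans L) => W F F1 F2.
    rewrite big_map !big_allpairs_dep /conj_coact big_map.
    apply: eq_bigr => y _ /=.
    set A := (p * s^-1 * p^-1)%g.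
    set A' := (q * p * q^-1 * r^-1 * (q * p * q^-1)^-1)%g.
    set Phi := fun (u : Hc A) (w : Hc p) (z : Hc s) =>
      F (act y.1 w) (Pi q r (Sb s (Pi (p^-1)%g (s^-1)%g u)) ** (Pi q r y.2 ** Pi q r z)).
    have Phi1 : forall w z, lin (fun u => Phi u w z).
      move=> w z; apply: (lin_comp (F2 _)); apply: (lin_comp (mulL_lin _)).
      apply: (lin_comp (Pi_lin _ _)); apply: (lin_comp (Sb_lin _)); exact: Pi_lin.
    have Phi2 : forall u z, lin (fun w => Phi u w z).
      by move=> u z; apply: (lin_comp (F1 _)); exact: actr.
    have Phi3 : forall u w, lin (Phi u w).
      move=> u w; apply: (lin_comp (F2 _)); apply: (lin_comp (mulR_lin _)).
      apply: (lin_comp (mulR_lin _)); exact: Pi_lin.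
    transitivity (\sum_(x <- cop3 H A p s (tr h2)) Phi x.1.1 x.1.2 x.2).
      by apply: eq_bigr => x _; rewrite /Phi !Pi_mul // /s; gsimpl.
    have hC := @Pi_cop3 (q^-1)%g A' (q * p * q^-1)%g r A p s (tr h)
      ltac:(by rewrite /A /A' /s; gsimpl) ltac:(by gsimpl) ltac:(by rewrite /s; gsimpl).
    have := hC W Phi Phi1 Phi2 Phi3; rewrite big_map /= => E.
    have eh : (tr h2 : Hc (A * p * s)%g) = Pi (q^-1)%g (A * p * s)%g (tr h : Hc (A' * (q * p * q^-1) * r)%g).
      rewrite /h2; apply: Pi_tr_both; (try unfold A, A', s); by gsimpl.
    rewrite eh -E; apply: eq_bigr => x _.
    rewrite /Phi conj_actE [Pi q r (Pi _ _ _)]Pi_inv ?tr_id; try by rewrite /s; gsimpl.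
    rewrite Pi_comp; last by rewrite /A /A' /s; gsimpl.
    rewrite (@Pi_Sb q (s^-1)%g s r (r^-1)%g); try by rewrite /s; gsimpl.
    rewrite Pi_comp; last by rewrite /A /A' /s; gsimpl.
    rewrite [Pi (q * _) _ _](@Pi_q _ ((q * p * q^-1)^-1)%g); last by gsimpl.
    by [].
  + move=> v g l.
    set s := (q^-1 * r * q)%g.
    have eg : g = Pi q r (Pi (q^-1)%g s g) by rewrite Pi_inv ?tr_id //; rewrite /s; gsimpl.
    have el : l = Pi q r (Pi (q^-1)%g s l) by rewrite Pi_inv ?tr_id //; rewrite /s; gsimpl.
    have -> : [seq (y.1, (g ** l) ** y.2) | y <- conj_coact q rho r v] =
      map (fun y => (y.1, Pi q r y.2))
        [seq (y.1, (Pi (q^-1)%g s g ** Pi (q^-1)%g s l) ** y.2) | y <- rho s v].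
      rewrite /conj_coact -!map_comp; apply: eq_map => y /=.
      by rewrite !Pi_mul -?eg -?el //; rewrite /s; gsimpl.
    have -> : [seq (y.1, g ** (l ** y.2)) | y <- conj_coact q rho r v] =
      map (fun y => (y.1, Pi q r y.2))
        [seq (y.1, Pi (q^-1)%g s g ** (Pi (q^-1)%g s l ** y.2)) | y <- rho s v].
      rewrite /conj_coact -!map_comp; apply: eq_map => y /=.
      by rewrite !Pi_mul -?eg -?el //; rewrite /s; gsimpl.
    exact: (teq2_mapr (Pi_lin q r) (rB _ _ _)).
  + move=> v g l.
    set s := (q^-1 * r * q)%g.
    have eg : g = Pi q r (Pi (q^-1)%g s g) by rewrite Pi_inv ?tr_id //; rewrite /s; gsimpl.
    have el : l = Pi q r (Pi (q^-1)%g s l) by rewrite Pi_inv ?tr_id //; rewrite /s; gsimpl.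
    have -> : [seq (y.1, (g ** y.2) ** l) | y <- conj_coact q rho r v] =
      map (fun y => (y.1, Pi q r y.2))
        [seq (y.1, (Pi (q^-1)%g s g ** y.2) ** Pi (q^-1)%g s l) | y <- rho s v].
      rewrite /conj_coact -!map_comp; apply: eq_map => y /=.
      by rewrite !Pi_mul -?eg -?el //; rewrite /s; gsimpl.
    have -> : [seq (y.1, g ** (y.2 ** l)) | y <- conj_coact q rho r v] =
      map (fun y => (y.1, Pi q r y.2))
        [seq (y.1, Pi (q^-1)%g s g ** (y.2 ** Pi (q^-1)%g s l)) | y <- rho s v].
      rewrite /conj_coact -!map_comp; apply: eq_map => y /=.
      by rewrite !Pi_mul -?eg -?el //; rewrite /s; gsimpl.
    exact: (teq2_mapr (Pi_lin q r) (rC _ _ _)).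
Qed.

End Main.

Theorem proposition4p6 (k : fieldType) (G : groupType) (H : cgdata k G) :
  is_crossed_cgwhq H ->
  (forall p : G, bijective (@ant k G H p)) ->
  forall (p q : G) (V : lmodType k) (act : V -> Hc H p -> V)
         (rho : forall r : G, V -> seq (V * Hc H r)),
    is_YDWQ H p V act rho ->
    is_YDWQ H (q * p * q^-1)%g V (conj_act q act) (conj_coact q rho).
Proof.
move=> [HW HX] _ p q V act rho.
exact: main_lemma.
Qed.
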